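(* Let $\mathcal G=(N,\Sigma,S,P)$ be a normalized spine grammar with spine direction $d$, and let $L_1=\{w\in\mathrm{Next}(\mathcal S(\mathcal G))\mid |w|=1\}$. Then there exists a pop-normalized MPDA $\mathcal A$ with $L(\mathcal A)\cup L_1=\mathrm{Next}(\mathcal S(\mathcal G))$. Moreover, the tree languages $\mathcal F(L(\mathcal A)\cup L_1)_S$ and $T(\mathcal G)$ coincide modulo relabeling, i.e. there is a relabeling $\rho$ with $\rho(\mathcal F(L(\mathcal A)\cup L_1)_S)=T(\mathcal G)$.
   Context: Spine grammar / normalized: $\mathcal G=(N,\Sigma,S,P)$ with $N=N_0\cup N_1$ (nullary/unary nonterminals), terminals $\Sigma=\Sigma_0\cup\Sigma_2$, start $S\in N_0$, productions of the forms $n\to\alpha$, $n\to b(\alpha)$ ($n\in N_0$, $b\in N_1$, $\alpha\in\Sigma_0$), $n\to b_1(b_2(\Box))$ ($b_i\in N_1$), $n\to\sigma(\Box,a)$, $n\to\sigma(a,\Box)$ ($\sigma\in\Sigma_2$, $a\in N_0\setminus\{S\}$), with a spine direction $d:\Sigma_2\to\{1,2\}$ such that in each production $n\to\sigma(\cdot,\cdot)$ containing $\Box$ the hole is in child $d(\sigma)$, and such that for each $n\in N_0$ no tree derivable from $n$ by one step followed by steps with only unary-nonterminal productions contains $n$. A step replaces a nullary nonterminal by a right-hand side, or a subtree $n(t')$ with $n\in N_1$ by the right-hand side with $\Box$ replaced by $t'$; $T(\mathcal G)$ is the set of terminal trees derivable from $S$. $\mathcal S(\mathcal G)$ is the language of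 the CFG with start $\top$, nonterminals $\{\top\}\cup N^2$ (write $n_g=(n,g)$), terminals $\alpha_n=(\alpha,n)$ and $\frac{\sigma}{n_1\ n_2}=(\sigma,n_1,n_2)$, and productions $\top\to\alpha_n$ for $(n\to\alpha)\in P$, $\top\to\alpha_nb_n$ for $(n\to b(\alpha))\in P$, and for all $g\in N$: $n_g\to b'_gb_g$ for $(n\to b(b'(\Box)))\in P$, $n_g\to\frac{\sigma}{g\ n'}$ for $(n\to\sigma(\Box,n'))\in P$, $n_g\to\frac{\sigma}{n'\ g}$ for $(n\to\sigma(n',\Box))\in P$. For an alphabet $\Theta$ and $\triangleleft\notin\Theta$, $\mathrm{Next}(L)=\bigcup_n\{\langle\theta_2,\theta_1\rangle\cdots\langle\theta_n,\theta_{n-1}\rangle\langle\triangleleft,\theta_n\rangle\mid\theta_1\cdots\theta_n\in L\}$. A letter $(s',\alpha_n)$ of $\mathrm{Next}(\mathcal S(\mathcal G))$ is regarded as the leaf symbol $((s',\alpha),n)$ and a letter $(s',\frac{\sigma}{n_1\ n_2})$ as the binary symbol $((s',\sigma),n_1,n_2)$ with direction $d((s',\sigma))=d(\sigma)$. For such annotated symbols define $\mathrm{gen}$ of a leaf symbol with annotation $n$ as $n$ and of a binary symbol annotated $(n_1,n_2)$ with underlying $\sigma$ as $n_{d(\sigma)}$; for a tree set $T$, $T_n$ is the set of trees whose root symbol has $\mathrm{gen}=n$; $\mathrm{attach}_T$ of a one-letter word is the leaf itself, and $\mathrm{attach}_T(w\,x)$ for a binary symbol $x$ annotated $(n_1,n_2)$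 with direction $k$ is the set of trees $x(t_1,t_2)$ with $t_k\in\mathrm{attach}_T(w)$ and $t_{3-k}\in T_{n_{3-k}}$; $\mathcal F(L)$ is the smallest $\mathcal F$ with $\mathrm{attach}_{\mathcal F}(w)\subseteq\mathcal F$ for all $w\in L$, and $\mathcal F(L)_S$ its trees whose root has $\mathrm{gen}=S$. MPDA $\mathcal A=(Q,\Delta,\Gamma,\delta,\tau,I,F)$: states $Q$, input symbols $\Delta$, stack symbols $\Gamma$, transitions $\delta\subseteq(Q\times\Gamma^{\le1}\times\Gamma^{\le1}\times Q)\setminus(Q\times\Gamma\times\Gamma\times Q)$, output $\tau:Q\to\Delta$, $I,F\subseteq Q$; moves $\langle q,\gamma\alpha\rangle\vdash\langle q',\gamma'\alpha\rangle$ for $(q,\gamma,\gamma',q')\in\delta$ if $\gamma\alpha\neq\varepsilon$; accepting runs start in $\langle q,\gamma\rangle$ with $q\in I$, $\gamma\in\Gamma$, and end in $\langle q,\varepsilon\rangle$ with $q\in F$; $L(\mathcal A)$ is the set of output strings $\tau(q_0)\cdots\tau(q_n)$ of accepting runs. Pop-normalized: some $\mathrm{return}:\Gamma\to Q$ satisfies $q'=\mathrm{return}(\gamma)$ for all $(q,\gamma,\varepsilon,q')\in\delta$, $\gamma\in\Gamma$. *)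

(* Defs.v *)
From mathcomp Require Import all_boot.
Set Implicit Arguments. Unset Strict Implicit. Unset Printing Implicit Defensive.

(* Spine direction: D1 = first child, D2 = second child. *)
Inductive dir := D1 | D2.

Inductive tree (A B : Type) := Leaf of A | Node of B & tree A B & tree A B.
Arguments Leaf {A B}. Arguments Node {A B}.

Fixpoint relabel (A B A' B' : Type) (f : A -> A') (g : B -> B') (t : tree A B)
  : tree A' B' :=
  match t with
  | Leaf a => Leaf (f a)
  | Node b l r => Node (g b) (relabel f g l) (relabel f g r)
  end.

Inductive star (T : Type) (R : T -> T -> Prop) : T -> T -> Prop :=
| star_refl x : star R x x
| star_step x y z : R x y -> star R y z -> star R x z.

Fixpoint ppath (T : Type) (R : T -> T -> Prop) (x : T) (s : seq T) : Prop :=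
  match s with [::] => True | y :: s' => R x y /\ ppath R y s' end.

Section SpineGrammar.
Variables (N0 N1 Sig0 Sig2 : finType).

Definition NT := (N0 + N1)%type.

(* Productions of a normalized spine grammar:
   PA n a      : n -> a             (n ∈ N0, a ∈ Σ0)
   PB n b a    : n -> b(a)          (n ∈ N0, b ∈ N1, a ∈ Σ0)
   PC n b1 b2  : n -> b1(b2(□))     (n, b1, b2 ∈ N1)
   PL n s a    : n -> s(□, a)       (n ∈ N1, s ∈ Σ2, a ∈ N0)
   PR n s a    : n -> s(a, □)       (n ∈ N1, s ∈ Σ2, a ∈ N0) *)
Inductive production :=
| PA (n : N0) (a : Sig0)
| PB (n : N0) (b : N1) (a : Sig0)
| PC (n b1 b2 : N1)
| PL (n : N1) (s : Sig2) (a : N0)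
| PR (n : N1) (s : Sig2) (a : N0).

Definition unary_lhs (p : production) : bool :=
  match p with PA _ _ | PB _ _ _ => false | _ => true end.

Inductive stree :=
| SL (a : Sig0)
| SB (s : Sig2) (l r : stree)
| SN0 (n : N0)
| SN1 (b : N1) (t : stree).

Fixpoint emb (t : tree Sig0 Sig2) : stree :=
  match t with Leaf a => SL a | Node s l r => SB s (emb l) (emb r) end.

Fixpoint hasN0 (n : N0) (t : stree) : Prop :=
  match t with
  | SL _ => False
  | SB _ l r => hasN0 n l \/ hasN0 n r
  | SN0 m => m = n
  | SN1 _ t' => hasN0 n t'
  end.

Inductive step_in (Q : pred production) : stree -> stree -> Prop :=
| st_A n a : Q (PA n a) -> step_in Q (SN0 n) (SL a)
| st_B n b a : Q (PB n b a) -> step_in Q (SN0 n) (SN1 b (SL a))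
| st_C n b1 b2 t : Q (PC n b1 b2) -> step_in Q (SN1 n t) (SN1 b1 (SN1 b2 t))
| st_L n s a t : Q (PL n s a) -> step_in Q (SN1 n t) (SB s t (SN0 a))
| st_R n s a t : Q (PR n s a) -> step_in Q (SN1 n t) (SB s (SN0 a) t)
| st_Bl s l l' r : step_in Q l l' -> step_in Q (SB s l r) (SB s l' r)
| st_Br s l r r' : step_in Q r r' -> step_in Q (SB s l r) (SB s l r')
| st_N1 b t t' : step_in Q t t' -> step_in Q (SN1 b t) (SN1 b t').

Definition normalized_spine (S : N0) (P : pred production) (d : Sig2 -> dir)
  : Prop :=
  (forall n s a, P (PL n s a) -> a <> S) /\
  (forall n s a, P (PR n s a) -> a <> S) /\
  (forall n s a, P (PL n s a) -> d s = D1) /\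
  (forall n s a, P (PR n s a) -> d s = D2) /\
  (forall (n : N0) t1 t, step_in P (SN0 n) t1 ->
     star (step_in (fun p => P p && unary_lhs p)) t1 t -> ~ hasN0 n t).

Definition TG (S : N0) (P : pred production) (t : tree Sig0 Sig2) : Prop :=
  star (step_in P) (SN0 S) (emb t).

(* terminals of S(G): α_n = SymA α n, σ/(n1 n2) = SymS σ n1 n2 *)
Inductive sym := SymA (a : Sig0) (n : NT) | SymS (s : Sig2) (n1 n2 : NT).

(* CFG S(G): SGnt n g w  <=>  nonterminal n_g derives w ; SG w <=> ⊤ derives w *)
Inductive SGnt (P : pred production) : NT -> NT -> seq sym -> Prop :=
| sg_C n b1 b2 g w1 w2 : P (PC n b1 b2) -> SGnt P (inr b2) g w1 ->
    SGnt P (inr b1) g w2 -> SGnt P (inr n) g (w1 ++ w2)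
| sg_L n s a g : P (PL n s a) -> SGnt P (inr n) g [:: SymS s g (inl a)]
| sg_R n s a g : P (PR n s a) -> SGnt P (inr n) g [:: SymS s (inl a) g].

Inductive SG (P : pred production) : seq sym -> Prop :=
| sg_A n a : P (PA n a) -> SG P [:: SymA a (inl n)]
| sg_B n b a w : P (PB n b a) -> SGnt P (inr b) (inl n) w ->
    SG P (SymA a (inl n) :: w).

(* letters of Next: ⟨θ', θ⟩ with θ' = None standing for ◁ *)
Definition letter := (option sym * sym)%type.

Definition next_word (s : seq sym) : seq letter :=
  zip (rcons (map Some (behead s)) None) s.

Definition Next (L : seq sym -> Prop) (w : seq letter) : Prop :=
  exists s, L s /\ 0 < size s /\ w = next_word s.

(* annotated leaf symbols ((s',α),n) and binary symbols ((s',σ),n1,n2) *)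
Definition X0 := (option sym * Sig0 * NT)%type.
Definition X2 := (option sym * Sig2 * NT * NT)%type.

Definition gen2 (d : Sig2 -> dir) (x : X2) : NT :=
  match d x.1.1.2 with D1 => x.1.2 | D2 => x.2 end.

Definition gen_tree (d : Sig2 -> dir) (t : tree X0 X2) : NT :=
  match t with Leaf x => x.2 | Node x _ _ => gen2 d x end.

Inductive attach (d : Sig2 -> dir) (T : tree X0 X2 -> Prop)
  : seq letter -> tree X0 X2 -> Prop :=
| att_leaf s' a n : attach d T [:: (s', SymA a n)] (Leaf (s', a, n))
| att_node1 w s' s n1 n2 t1 t2 : d s = D1 ->
    attach d T w t1 -> T t2 -> gen_tree d t2 = n2 ->
    attach d T (rcons w (s', SymS s n1 n2)) (Node (s', s, n1, n2) t1 t2)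
| att_node2 w s' s n1 n2 t1 t2 : d s = D2 ->
    T t1 -> gen_tree d t1 = n1 -> attach d T w t2 ->
    attach d T (rcons w (s', SymS s n1 n2)) (Node (s', s, n1, n2) t1 t2).

(* F(L): the smallest tree set closed under attach for words of L *)
Definition FL (d : Sig2 -> dir) (L : seq letter -> Prop) (t : tree X0 X2)
  : Prop :=
  forall F : tree X0 X2 -> Prop,
    (forall w t', L w -> attach d F w t' -> F t') -> F t.

Definition FL_S (d : Sig2 -> dir) (S : N0) (L : seq letter -> Prop)
  (t : tree X0 X2) : Prop :=
  FL d L t /\ gen_tree d t = inl S.

End SpineGrammar.

Record mpda (Delta : Type) := Mpda {
  mQ : finType;
  mG : finType;
  mdelta : mQ -> option mG -> option mG -> mQ -> bool;
  mtau : mQ -> Delta;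
  mI : pred mQ;
  mF : pred mQ;
  mdelta_ok : forall q g g' q', ~~ mdelta q (Some g) (Some g') q' }.

Arguments mQ {Delta} m. Arguments mG {Delta} m.
Arguments mdelta {Delta} m _ _ _ _. Arguments mtau {Delta} m _.
Arguments mI {Delta} m _. Arguments mF {Delta} m _.

Definition ocons (T : Type) (o : option T) (s : seq T) : seq T :=
  match o with Some x => x :: s | None => s end.

Definition mconfig (Delta : Type) (A : mpda Delta) := (mQ A * seq (mG A))%type.

Definition mmove (Delta : Type) (A : mpda Delta) (c c' : mconfig A) : Prop :=
  exists g g' al, mdelta A c.1 g g' c'.1 /\ c.2 = ocons g al /\
    c'.2 = ocons g' al /\ c.2 <> [::].

Definition mlang (Delta : Type) (A : mpda Delta) (w : seq Delta) : Prop :=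
  exists (q0 : mQ A) (g0 : mG A) (cs : seq (mconfig A)),
    let c0 : mconfig A := (q0, [:: g0]) in
    mI A q0 /\ ppath (@mmove Delta A) c0 cs /\
    (last c0 cs).2 = [::] /\ mF A (last c0 cs).1 /\
    w = map (fun c : mconfig A => mtau A c.1) (c0 :: cs).

Definition pop_normalized (Delta : Type) (A : mpda Delta) : Prop :=
  exists ret : mG A -> mQ A,
    forall q g q', mdelta A q (Some g) None q' -> q' = ret g.

(* Main.v *)
Require Import Defs.
From mathcomp Require Import all_boot.
From Stdlib Require Import ClassicalEpsilon.
Set Implicit Arguments. Unset Strict Implicit. Unset Printing Implicit Defensive.

Definition pbool (A : Prop) : bool :=
  if excluded_middle_informative A then true else false.

Lemma pboolP (A : Prop) : pbool A <-> A.
Proof. by rewrite /pbool; case: excluded_middle_informative. Qed.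

Section Part1.
Variables (N0 N1 Sig0 Sig2 : finType).
Variable (P : pred (production N0 N1 Sig0 Sig2)).

Local Notation NT := (NT N0 N1).
Local Notation sym := (sym N0 N1 Sig0 Sig2).
Local Notation letter := (letter N0 N1 Sig0 Sig2).
Local Notation PB := (@PB N0 N1 Sig0 Sig2).
Local Notation PC := (@PC N0 N1 Sig0 Sig2).
Local Notation PL := (@PL N0 N1 Sig0 Sig2).
Local Notation PR := (@PR N0 N1 Sig0 Sig2).
Local Notation SymA := (@SymA N0 N1 Sig0 Sig2).
Local Notation SymS := (@SymS N0 N1 Sig0 Sig2).

Lemma SGnt_ne n g v : SGnt P n g v -> v <> [::].
Proof.
elim=> // n0 b1 b2 g0 w1 w2 _ _ IH _ _.
by case: w1 IH.
Qed.

Definition leafp (g : NT) (V : N1) (x : sym) : Prop :=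
  exists s a, (P (PL V s a) /\ x = SymS s g (inl a)) \/
              (P (PR V s a) /\ x = SymS s (inl a) g).

Lemma leaf_SGnt g V x : leafp g V x -> SGnt P (inr V) g [:: x].
Proof. by move=> [s [a [[Hp ->]|[Hp ->]]]]; [apply: sg_L|apply: sg_R]. Qed.

Inductive Rem (g : NT) : N1 -> N1 -> seq sym -> Prop :=
| rem_nil Z : Rem g Z Z [::]
| rem_cons Z X Y W v1 v2 : P (PC Y W X) -> SGnt P (inr W) g v1 ->
    Rem g Z Y v2 -> Rem g Z X (v1 ++ v2).

Lemma rem_sgnt g Z X v : Rem g Z X v ->
  forall u, SGnt P (inr X) g u -> SGnt P (inr Z) g (u ++ v).
Proof.
elim=> {Z X v} [Z|Z X Y W v1 v2 Hp Hw _ IH] u Hu; first by rewrite cats0.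
rewrite catA; apply: IH; exact: sg_C Hp Hu Hw.
Qed.

Lemma rem_trans g Y X v1 : Rem g Y X v1 ->
  forall Z v2, Rem g Z Y v2 -> Rem g Z X (v1 ++ v2).
Proof.
elim=> {Y X v1} [Y|Y X Y' W u1 u2 Hp Hw _ IH] Z v2 H //.
rewrite -catA; apply: rem_cons Hp Hw _; exact: IH.
Qed.

Lemma rem_nil_inv g Z X v : Rem g Z X v -> v = [::] -> Z = X.
Proof.
case=> // Z0 X0 Y W v1 v2 _ Hw _.
by case: v1 Hw => // /SGnt_ne.
Qed.

Lemma LC n g w : SGnt P n g w -> forall W x u, n = inr W -> w = x :: u ->
  exists C, leafp g C x /\ Rem g W C u.
Proof.
elim=> {n g w}.
- move=> n b1 b2 g w1 w2 Hp H1 IH1 H2 _ W x u [<-].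
  case: w1 H1 IH1 => [/SGnt_ne //|y u1] H1 IH1 [<- <-].
  have [C [HC HR]] := IH1 _ _ _ erefl erefl.
  exists C; split=> //; apply: (rem_trans HR).
  rewrite -[w2]cats0; apply: rem_cons Hp H2 (rem_nil _ _).
- move=> n s a g Hp W x u [<-] [<- <-].
  exists n; split; last exact: rem_nil.
  by exists s, a; left.
- move=> n s a g Hp W x u [<-] [<- <-].
  exists n; split; last exact: rem_nil.
  by exists s, a; right.
Qed.

Lemma LC_inv g W C x u : leafp g C x -> Rem g W C u -> SGnt P (inr W) g (x :: u).
Proof. by move=> /leaf_SGnt H HR; apply: (rem_sgnt HR H). Qed.

Definition E := ((Sig0 * NT) + (Sig2 * NT * NT))%type.
Definition enc (x : sym) : E :=
  match x with Defs.SymA a n => inl (a, n) | Defs.SymS s n1 n2 => inr (s, n1, n2) end.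
Definition dec (e : E) : sym :=
  match e with inl (a, n) => SymA a n | inr (s, n1, n2) => SymS s n1 n2 end.
Lemma encK : cancel enc dec. Proof. by case. Qed.

Definition Q := ((option E * E) * NT * option (N1 + N1 * N1))%type.
Definition qlt (q : Q) : letter := (omap dec q.1.1.1, dec q.1.1.2).
Definition qg (q : Q) : NT := q.1.2.
Definition qm (q : Q) : option (N1 + N1 * N1) := q.2.
Definition mk (l : letter) (g : NT) (m : option (N1 + N1 * N1)) : Q :=
  ((omap enc l.1, enc l.2), g, m).
Arguments qlt : simpl never.
Arguments qg : simpl never.
Arguments qm : simpl never.
Arguments mk : simpl never.
Lemma qlt_mk l g m : qlt (mk l g m) = l.
Proof. by case: l => [[x|] y]; rewrite /qlt /mk /= !encK. Qed.
Opaque qlt.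

Inductive Tr : Q -> option Q -> option Q -> Q -> Prop :=
| tr_start_int q q' W C : qm q = Some (inl W) -> (qlt q).1 = Some (qlt q').2 ->
    qg q' = qg q -> qm q' = Some (inr (W, C)) -> leafp (qg q) C (qlt q').2 ->
    Tr q None None q'
| tr_start_pop q r W : qm q = Some (inl W) -> (qlt q).1 = Some (qlt r).2 ->
    leafp (qg q) W (qlt r).2 -> Tr q (Some r) None r
| tr_in_int q q' Z X Y V : qm q = Some (inr (Z, X)) -> (qlt q).1 = Some (qlt q').2 ->
    qg q' = qg q -> qm q' = Some (inr (Z, Y)) -> P (PC Y V X) ->
    leafp (qg q) V (qlt q').2 -> Tr q None None q'
| tr_in_pop q r Z X V : qm q = Some (inr (Z, X)) -> (qlt q).1 = Some (qlt r).2 ->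
    P (PC Z V X) -> leafp (qg q) V (qlt r).2 -> Tr q (Some r) None r
| tr_in_tail q q' Z X W C : qm q = Some (inr (Z, X)) -> (qlt q).1 = Some (qlt q').2 ->
    qg q' = qg q -> qm q' = Some (inr (W, C)) -> P (PC Z W X) ->
    leafp (qg q) C (qlt q').2 -> Tr q None None q'
| tr_in_push q q' r Z X Y W C : qm q = Some (inr (Z, X)) -> (qlt q).1 = Some (qlt q').2 ->
    qg q' = qg q -> qm q' = Some (inr (W, C)) -> qg r = qg q -> qm r = Some (inr (Z, Y)) ->
    P (PC Y W X) -> leafp (qg q) C (qlt q').2 -> Tr q None (Some r) q'.

Definition mdelta (q : Q) (o o' : option Q) (q' : Q) : bool := pbool (Tr q o o' q').

Lemma mdelta_ok q g g' q' : ~~ mdelta q (Some g) (Some g') q'.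
Proof. by apply/negP => /pboolP H; inversion H. Qed.

Definition mIQ (q : Q) : bool := pbool (exists n b a, qg q = inl n /\ qm q = Some (inl b) /\
  (qlt q).2 = SymA a (inl n) /\ P (PB n b a)).
Definition mFQ (q : Q) : bool := pbool (qm q = None /\ (qlt q).1 = None).

Definition AA : mpda letter := @Mpda letter Q Q mdelta qlt mIQ mFQ mdelta_ok.

Lemma AA_pop : pop_normalized AA.
Proof. by exists id => q g q' /pboolP H; inversion H. Qed.

Local Notation cfg := (Q * seq Q)%type.

Lemma mmoveP (c c' : cfg) : @mmove _ AA c c' ->
  exists o o' al, Tr c.1 o o' c'.1 /\ c.2 = ocons o al /\ c'.2 = ocons o' al /\ c.2 <> [::].
Proof. by move=> [o [o' [al [/pboolP H [E1 [E2 Hn]]]]]]; exists o, o', al. Qed.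

Lemma mmove_of q o o' q' al : Tr q o o' q' -> ocons o al <> [::] ->
  @mmove _ AA (q, ocons o al) (q', ocons o' al).
Proof. by move=> H Hn; exists o, o', al; split=> //; apply/pboolP. Qed.

Lemma Tr_la q o o' q' : Tr q o o' q' -> (qlt q).1 = Some (qlt q').2.
Proof. by case. Qed.

Definition MS (g : NT) (m : option (N1 + N1 * N1)) (u : seq sym) : Prop :=
  match m with
  | None => False
  | Some (inl W) => SGnt P (inr W) g u
  | Some (inr (Z, X)) => Rem g Z X u
  end.

Fixpoint Sem (q : Q) (stk : seq Q) (v : seq sym) : Prop :=
  match stk with
  | [::] => qm q = None /\ v = [::]
  | r :: stk' => exists v0 v', v = rcons v0 (qlt r).2 ++ v' /\
      MS (qg q) (qm q) (rcons v0 (qlt r).2) /\ (qlt r).1 = ohead v' /\ Sem r stk' v'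
  end.

Lemma sound_step (c c' : cfg) v : @mmove _ AA c c' -> Sem c'.1 c'.2 v ->
  (qlt c'.1).1 = ohead v -> Sem c.1 c.2 ((qlt c'.1).2 :: v).
Proof.
move=> /mmoveP [o [o' [al [H [E1 [E2 Hn]]]]]].
case: c c' E1 E2 Hn H => [q stk] [q' stk'] /= -> -> Hn H.
case: H Hn => {q q' o o'}.
- move=> q q' W C Hm Hla Hg Hm' Hl Hn /=.
  case: al Hn => [//|r al] _ [v0 [v' [Ev [HM [Hr HS]]]]] _.
  exists ((qlt q').2 :: v0), v'; split; first by rewrite Ev.
  rewrite Hm /=; split=> //; apply: LC_inv Hl _.
  by rewrite Hm' Hg in HM.
- move=> q r W Hm Hla Hl _ HS Hr /=.
  exists [::], v; split=> //; rewrite Hm /=; split=> //.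
  exact: leaf_SGnt.
- move=> q q' Z X Y V Hm Hla Hg Hm' Hp Hl Hn /=.
  case: al Hn => [//|r al] _ [v0 [v' [Ev [HM [Hr HS]]]]] _.
  exists ((qlt q').2 :: v0), v'; split; first by rewrite Ev.
  rewrite Hm /=; split=> //.
  rewrite Hm' Hg /= in HM.
  exact: (rem_cons (v1 := [:: (qlt q').2]) Hp (leaf_SGnt Hl) HM).
- move=> q r Z X V Hm Hla Hp Hl _ HS Hr /=.
  exists [::], v; split=> //; rewrite Hm /=; split=> //.
  rewrite -[[:: _]]cats0; apply: rem_cons Hp (leaf_SGnt Hl) (rem_nil _ _).
- move=> q q' Z X W C Hm Hla Hg Hm' Hp Hl Hn /=.
  case: al Hn => [//|r al] _ [v0 [v' [Ev [HM [Hr HS]]]]] _.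
  exists ((qlt q').2 :: v0), v'; split; first by rewrite Ev.
  rewrite Hm /=; split=> //.
  rewrite Hm' Hg /= in HM.
  rewrite -[_ :: rcons _ _]cats0; apply: rem_cons Hp (LC_inv Hl HM) (rem_nil _ _).
- move=> q q' r Z X Y W C Hm Hla Hg Hm' Hgr Hmr Hp Hl Hn /=.
  move=> [v0 [v' [Ev [HM [Hr HS]]]]] _.
  case: al Hn HS => [_|r' al] /=; first by rewrite Hmr; case.
  move=> _ [v1 [v'' [Ev' [HM' [Hr' HS']]]]].
  exists ((qlt q').2 :: rcons v0 (qlt r).2 ++ v1), v''; split.
    by rewrite Ev Ev' rcons_cons rcons_cat /= catA.
  rewrite Hm /=; split; last by split.
  rewrite Hm' Hg /= in HM; rewrite Hmr Hgr /= in HM'.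
  rewrite rcons_cat.
  exact: (rem_cons (v1 := _ :: rcons v0 _) Hp (LC_inv Hl HM) HM').
Qed.

Lemma Tr_la' (c c' : cfg) : @mmove _ AA c c' -> (qlt c.1).1 = Some (qlt c'.1).2.
Proof. by move=> /mmoveP [o [o' [al [H _]]]]; exact: Tr_la H. Qed.

Lemma sound (c : cfg) cs : ppath (@mmove _ AA) c cs -> (last c cs).2 = [::] ->
  mFQ (last c cs).1 ->
  Sem c.1 c.2 (map (fun c : cfg => (qlt c.1).2) cs) /\
  (qlt c.1).1 = ohead (map (fun c : cfg => (qlt c.1).2) cs).
Proof.
elim: cs c => [|c' cs IH] c /=.
  move=> _ Hs /pboolP [Hm Hl]; case: c Hs Hm Hl => q stk /= -> Hm Hl; by split.
move=> [Hmv Hp] Hs HF; have [HS Hl] := IH c' Hp Hs HF; split.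
  exact: sound_step Hmv HS Hl.
exact: Tr_la' Hmv.
Qed.

Lemma qg_mk l g m : qg (mk l g m) = g. Proof. by []. Qed.
Lemma qm_mk l g m : qm (mk l g m) = m. Proof. by []. Qed.

Lemma cat_rcons_last (s t w : seq sym) c : s ++ t = rcons w c -> t <> [::] ->
  exists t', t = rcons t' c.
Proof.
case/lastP: t => // t' c'; rewrite -rcons_cat => /rcons_inj [_ ->] _.
by exists t'.
Qed.

Lemma SGnt1 g W x : SGnt P (inr W) g [:: x] -> leafp g W x.
Proof.
move=> H; have [C [HC HR]] := LC H erefl erefl.
by rewrite (rem_nil_inv HR erefl).
Qed.

Lemma comp_step (c : cfg) x v : Sem c.1 c.2 (x :: v) -> (qlt c.1).1 = Some x ->
  exists c' : cfg, @mmove _ AA c c' /\ (qlt c'.1).2 = x /\ Sem c'.1 c'.2 v /\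
    (qlt c'.1).1 = ohead v.
Proof.
case: c => q [|r al] /=; first by move=> [_].
move=> [v0 [v' [Ev [HM [Hr HS]]]]] Hla.
case Hm: (qm q) HM => [[W|[Z X]]|] //= HM.
- case: v0 Ev HM => [|y v0] /= Ev HM.
  + case: Ev => Ex Ev; subst x v'.
    exists (r, al); split; last by [].
    apply: (mmove_of (o := Some r) (o' := None) (al := al)) => //.
    apply: tr_start_pop Hm Hla (SGnt1 HM).
  + case: Ev => Ex Ev; subst y.
    have [C [HC HR]] := LC HM erefl erefl.
    exists (mk (ohead v, x) (qg q) (Some (inr (W, C))), r :: al).
    rewrite /= qlt_mk; split; last first.
      split=> //; split=> //; exists v0, v'; split=> //.
    apply: (mmove_of (o := None) (o' := None) (al := r :: al)) => //.
    by apply: (tr_start_int (W := W) (C := C)); rewrite ?qlt_mk ?qg_mk ?qm_mk.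
- move: HM; move Eu: (rcons v0 (qlt r).2) => u HM.
  case: HM Eu Ev Hm => [Z0 /(congr1 size)|]; first by rewrite size_rcons.
  move=> {}Z {}X Y W v1 v2 Hp Hw HR Eu Ev Hm.
  rewrite Eu in Ev; move/esym: Eu => Eu.
  case: v1 Hw Eu Ev => [/SGnt_ne //|y u1] Hw Eu /= [Exy Ev]; subst y.
  have [C [HC HC']] := LC Hw erefl erefl.
  case: u1 HC' Hw Eu Ev => [|z1 u1] HC' Hw Eu Ev.
  + have EC := rem_nil_inv HC' erefl; subst C.
    case: v2 HR Eu Ev => [|z2 v2] HR Eu Ev.
    * have EY := rem_nil_inv HR erefl; subst Y.
      move: Eu; rewrite /= -[[:: x]]/(rcons [::] x) => /rcons_inj [_ Ex]; subst x.
      rewrite /= in Ev; subst v'.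
      exists (r, al); split; last by [].
      apply: (mmove_of (o := Some r) (o' := None) (al := al)) => //.
      exact: tr_in_pop Hm Hla Hp HC.
    * have Hnz : z2 :: v2 <> [::] by [].
      have [v2' Ev2] := cat_rcons_last Eu Hnz.
      exists (mk (ohead v, x) (qg q) (Some (inr (Z, Y))), r :: al).
      rewrite /= qlt_mk; split; last first.
        split=> //; split=> //; exists v2', v'; rewrite -Ev2; split=> //; by rewrite ?qg_mk ?qm_mk.
      apply: (mmove_of (o := None) (o' := None) (al := r :: al)) => //.
      by apply: (tr_in_int (Z := Z) (X := X) (Y := Y) (V := W)); rewrite ?qlt_mk ?qg_mk ?qm_mk.
  + set u1' := z1 :: u1 in HC' Hw Eu Ev *.
    case: v2 HR Eu Ev => [|z2 v2] HR Eu Ev.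
    * have EY := rem_nil_inv HR erefl; subst Y.
      rewrite cats0 in Eu.
      have Hnz : z1 :: u1 <> [::] by [].
      have [u1'' Eu1] := cat_rcons_last (s := [:: x]) Eu Hnz.
      exists (mk (ohead v, x) (qg q) (Some (inr (W, C))), r :: al).
      rewrite /= qlt_mk; split; last first.
        split=> //; split=> //; exists u1'', v'; rewrite Ev cats0 -Eu1; split=> //.
      apply: (mmove_of (o := None) (o' := None) (al := r :: al)) => //.
      by apply: (tr_in_tail (Z := Z) (X := X) (W := W) (C := C)); rewrite ?qlt_mk ?qg_mk ?qm_mk.
    * have Hnz : z2 :: v2 <> [::] by [].
      have [v2' Ev2] := cat_rcons_last Eu Hnz.
      have [u1'' [z Eu1]] : exists u1'' z, u1' = rcons u1'' z.
        by exists (belast z1 u1), (last z1 u1); exact: lastI.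
      set dl := mk (ohead (z2 :: v2 ++ v'), z) (qg q) (Some (inr (Z, Y))).
      exists (mk (ohead v, x) (qg q) (Some (inr (W, C))), dl :: r :: al).
      rewrite /= qlt_mk; split; last first.
        split=> //; split=> //; exists u1'', (z2 :: v2 ++ v').
        rewrite /dl qlt_mk Ev -Eu1 -catA; split=> //.
        split=> //; split=> //; exists v2', v'; rewrite -Ev2; split=> //.
      apply: (mmove_of (o := None) (o' := Some dl) (al := r :: al)) => //.
      by apply: (tr_in_push (Z := Z) (X := X) (Y := Y) (W := W) (C := C));
        rewrite /dl ?qlt_mk ?qg_mk ?qm_mk.
Qed.

Lemma complete v : forall c : cfg, Sem c.1 c.2 v -> (qlt c.1).1 = ohead v ->
  exists cs, ppath (@mmove _ AA) c cs /\ map (fun c : cfg => (qlt c.1).2) cs = v /\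
    (last c cs).2 = [::] /\ mFQ (last c cs).1.
Proof.
elim: v => [|x v IH] c.
  case: c => q [|r al] /=; last by move=> [v0 [v' [/(congr1 size)]]]; rewrite size_cat size_rcons.
  move=> [Hm _] Hl; exists [::]; split=> //; split=> //; split=> //.
  by apply/pboolP.
move=> HS Hl; have [c' [Hmv [Hx [HS' Hl']]]] := comp_step HS Hl.
have [cs [Hp [Hm [Hs HF]]]] := IH c' HS' Hl'.
by exists (c' :: cs); split=> //=; rewrite Hm Hx.
Qed.

Lemma next_word_cons' (x : sym) v :
  next_word (x :: v) = (ohead v, x) :: next_word v.
Proof. by case: v. Qed.

Lemma out_word (c : cfg) cs : ppath (@mmove _ AA) c cs -> (qlt (last c cs).1).1 = None ->
  map (fun c : cfg => qlt c.1) (c :: cs) =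
  next_word ((qlt c.1).2 :: map (fun c : cfg => (qlt c.1).2) cs).
Proof.
elim: cs c => [|c' cs IH] c /=.
  by move=> _ Hl; rewrite /next_word /= -Hl -surjective_pairing.
move=> [Hmv Hp] Hl; rewrite next_word_cons' -IH //=.
by rewrite -(Tr_la' Hmv) -surjective_pairing.
Qed.

Lemma mlang_iff w : (mlang AA w \/ (Next (SG P) w /\ size w = 1)) <-> Next (SG P) w.
Proof.
split; last first.
  move=> HN; case: (HN) => s [Hs [_ Ew]]; case: Hs Ew => {s}.
    by move=> n a Hp Ew; right; split=> //; rewrite Ew.
  move=> n b a v Hp Hv Ew; left.
  have Hne := SGnt_ne Hv.
  have [v0 [y Ev]] : exists v0 y, v = rcons v0 y.
    by case: v Hne {Hp Hv Ew} => [//|x1 v1] _; exists (belast x1 v1), (last x1 v1); exact: lastI.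
  set q0 := mk (ohead v, SymA a (inl n)) (inl n) (Some (inl b)).
  set g0 := mk (None, y) (inl n) None.
  have HS : Sem q0 [:: g0] v.
    exists v0, [::]; rewrite /g0 qlt_mk cats0; split=> //; split=> //.
    by rewrite /q0 qg_mk qm_mk -Ev.
  have [cs [Hp' [Hm [Hs HF]]]] := @complete v (q0, [:: g0]) HS (ltac:(by rewrite /= qlt_mk)).
  exists q0, g0, cs; split.
    by apply/pboolP; exists n, b, a; rewrite /q0 qlt_mk qg_mk qm_mk.
  split=> //; split=> //; split=> //.
  rewrite Ew (out_word Hp'); last by move: HF => /pboolP [].
  by rewrite Hm /= qlt_mk.
case=> [|[]] //.
move=> [q0 [g0 [cs [HI [Hp [Hs [HF ->]]]]]]].
have [HS _] := sound Hp Hs HF.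
move: HI => /pboolP [n [b [a [Hg [Hm [Hl HPB]]]]]].
move: HS => /= [v0 [v' [Ev [HM [_ [Hm0 Ev']]]]]]; subst v'.
rewrite cats0 in Ev; rewrite Hm Hg -Ev /= in HM.
exists ((qlt q0).2 :: map (fun c : cfg => (qlt c.1).2) cs); split.
  rewrite Hl; exact: sg_B HPB HM.
split=> //; apply: out_word Hp _; by move: HF => /pboolP [].
Qed.

End Part1.

Section Part2.
Variables (N0 N1 Sig0 Sig2 : finType).
Variable (P : pred (production N0 N1 Sig0 Sig2)).
Variable (d : Sig2 -> dir).

Local Notation prod := (production N0 N1 Sig0 Sig2).
Local Notation sym := (sym N0 N1 Sig0 Sig2).
Local Notation letter := (letter N0 N1 Sig0 Sig2).
Local Notation ttree := (tree Sig0 Sig2).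
Local Notation xtree := (tree (X0 N0 N1 Sig0 Sig2) (X2 N0 N1 Sig0 Sig2)).
Local Notation stree := (stree N0 N1 Sig0 Sig2).
Local Notation PA := (@PA N0 N1 Sig0 Sig2).
Local Notation PB := (@PB N0 N1 Sig0 Sig2).
Local Notation PC := (@PC N0 N1 Sig0 Sig2).
Local Notation PL := (@PL N0 N1 Sig0 Sig2).
Local Notation PR := (@PR N0 N1 Sig0 Sig2).
Local Notation SymA := (@SymA N0 N1 Sig0 Sig2).
Local Notation SymS := (@SymS N0 N1 Sig0 Sig2).
Local Notation emb := (@emb N0 N1 Sig0 Sig2).
Local Notation SN0 := (@SN0 N0 N1 Sig0 Sig2).
Local Notation SN1 := (@SN1 N0 N1 Sig0 Sig2).
Local Notation SB := (@SB N0 N1 Sig0 Sig2).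
Local Notation SL := (@SL N0 N1 Sig0 Sig2).

Inductive Der : N0 -> ttree -> Prop :=
| der_A n a : P (PA n a) -> Der n (Leaf a)
| der_B n b a t : P (PB n b a) -> DerB b (Leaf a) t -> Der n t
with DerB : N1 -> ttree -> ttree -> Prop :=
| derB_C n b1 b2 t0 t1 t : P (PC n b1 b2) -> DerB b2 t0 t1 -> DerB b1 t1 t -> DerB n t0 t
| derB_L n s a t0 t2 : P (PL n s a) -> Der a t2 -> DerB n t0 (Node s t0 t2)
| derB_R n s a t0 t2 : P (PR n s a) -> Der a t2 -> DerB n t0 (Node s t2 t0).

Scheme Der_mut := Induction for Der Sort Prop
with DerB_mut := Induction for DerB Sort Prop.

Lemma star_trans (T : Type) (R : T -> T -> Prop) x y z :
  star R x y -> star R y z -> star R x z.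
Proof. by elim=> // x0 y0 z0 H _ IH Hz; apply: star_step H (IH Hz). Qed.

Lemma star_map (T : Type) (R : T -> T -> Prop) (f : T -> T) :
  (forall x y, R x y -> R (f x) (f y)) -> forall x y, star R x y -> star R (f x) (f y).
Proof.
move=> Hf x y; elim=> [x0|x0 y0 z0 H _ IH]; first exact: star_refl.
exact: star_step (Hf _ _ H) IH.
Qed.

Lemma star_N1 b x y : star (step_in P) x y -> star (step_in P) (SN1 b x) (SN1 b y).
Proof. exact: (@star_map _ (step_in P) (fun u => SN1 b u) (fun x y (H : step_in P x y) => st_N1 b H)). Qed.
Lemma star_Bl s r x y : star (step_in P) x y -> star (step_in P) (SB s x r) (SB s y r).
Proof. exact: (@star_map _ (step_in P) (fun u => SB s u r) (fun x y (H : step_in P x y) => st_Bl s r H)). Qed.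
Lemma star_Br s l x y : star (step_in P) x y -> star (step_in P) (SB s l x) (SB s l y).
Proof. exact: (@star_map _ (step_in P) (fun u => SB s l u) (fun x y (H : step_in P x y) => st_Br s l H)). Qed.

Lemma der_star :
  (forall n t, Der n t -> star (step_in P) (SN0 n) (emb t)) /\
  (forall b t0 t, DerB b t0 t -> star (step_in P) (SN1 b (emb t0)) (emb t)).
Proof.
split.
- apply: (@Der_mut (fun n t _ => star (step_in P) (SN0 n) (emb t))
                  (fun b t0 t _ => star (step_in P) (SN1 b (emb t0)) (emb t))).
  + move=> n a Hp; apply: star_step (st_A Hp) (star_refl _ _).
  + move=> n b a t Hp _ IH; exact: star_step (st_B Hp) IH.
  + move=> n b1 b2 t0 t1 t Hp _ IH1 _ IH2.
    apply: star_step (st_C _ Hp) _.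
    apply: star_trans _ IH2.
    exact: star_N1.
  + move=> n s a t0 t2 Hp _ IH.
    apply: star_step (st_L _ Hp) _ => /=.
    exact: star_Br.
  + move=> n s a t0 t2 Hp _ IH.
    apply: star_step (st_R _ Hp) _ => /=.
    exact: star_Bl.
- apply: (@DerB_mut (fun n t _ => star (step_in P) (SN0 n) (emb t))
                  (fun b t0 t _ => star (step_in P) (SN1 b (emb t0)) (emb t))).
  + move=> n a Hp; apply: star_step (st_A Hp) (star_refl _ _).
  + move=> n b a t Hp _ IH; exact: star_step (st_B Hp) IH.
  + move=> n b1 b2 t0 t1 t Hp _ IH1 _ IH2.
    apply: star_step (st_C _ Hp) _.
    apply: star_trans _ IH2.
    exact: star_N1.
  + move=> n s a t0 t2 Hp _ IH.
    apply: star_step (st_L _ Hp) _ => /=.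
    exact: star_Br.
  + move=> n s a t0 t2 Hp _ IH.
    apply: star_step (st_R _ Hp) _ => /=.
    exact: star_Bl.
Qed.

Fixpoint Big (u : stree) (t : ttree) : Prop :=
  match u with
  | Defs.SL a => t = Leaf a
  | Defs.SB s l r => exists tl tr, t = Node s tl tr /\ Big l tl /\ Big r tr
  | Defs.SN0 n => Der n t
  | Defs.SN1 b u' => exists t0, Big u' t0 /\ DerB b t0 t
  end.

Lemma Big_emb t : Big (emb t) t.
Proof. by elim: t => [a|s l IHl r IHr] //=; exists l, r. Qed.

Lemma step_back u u' : step_in P u u' -> forall t, Big u' t -> Big u t.
Proof.
elim=> /=.
- by move=> n a Hp t ->; apply: der_A.
- by move=> n b a Hp t [t0 [-> H]]; apply: der_B Hp H.
- move=> n b1 b2 u0 Hp t [t0 [[t1 [Hu H2]] H1]].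
  exists t1; split=> //; exact: derB_C Hp H2 H1.
- move=> n s a u0 Hp t [tl [tr [-> [Hl Hr]]]].
  exists tl; split=> //; exact: derB_L Hp Hr.
- move=> n s a u0 Hp t [tl [tr [-> [Hl Hr]]]].
  exists tr; split=> //; exact: derB_R Hp Hl.
- move=> s l l' r _ IH t [tl [tr [-> [Hl Hr]]]].
  by exists tl, tr; split=> //; split=> //; apply: IH.
- move=> s l r r' _ IH t [tl [tr [-> [Hl Hr]]]].
  by exists tl, tr; split=> //; split=> //; apply: IH.
- move=> b u0 u1 _ IH t [t0 [H1 H2]].
  by exists t0; split=> //; apply: IH.
Qed.

Lemma star_back u u' : star (step_in P) u u' -> forall t, Big u' t -> Big u t.
Proof.
elim=> // x y z H _ IH t Hz. exact: (step_back H (IH t Hz)).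
Qed.

Lemma TG_Der S t : TG S P t <-> Der S t.
Proof.
split; first by move=> H; exact: (star_back H (Big_emb t)).
by move/(proj1 der_star).
Qed.


Local Notation X0t := (X0 N0 N1 Sig0 Sig2).
Local Notation X2t := (X2 N0 N1 Sig0 Sig2).

Inductive step1 (T : xtree -> Prop) : xtree -> letter -> xtree -> Prop :=
| s1_1 s' s n1 n2 t1 t2 : d s = D1 -> T t2 -> gen_tree d t2 = n2 ->
    step1 T t1 (s', SymS s n1 n2) (Node (s', s, n1, n2) t1 t2)
| s1_2 s' s n1 n2 t1 t2 : d s = D2 -> T t1 -> gen_tree d t1 = n1 ->
    step1 T t2 (s', SymS s n1 n2) (Node (s', s, n1, n2) t1 t2).

Fixpoint ext (T : xtree -> Prop) (t0 : xtree) (ys : seq letter) (t : xtree) : Prop :=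
  match ys with
  | [::] => t = t0
  | y :: ys' => exists t1, step1 T t0 y t1 /\ ext T t1 ys' t
  end.

Lemma ext_cat T t0 ys1 ys2 t :
  ext T t0 (ys1 ++ ys2) t <-> exists t1, ext T t0 ys1 t1 /\ ext T t1 ys2 t.
Proof.
elim: ys1 t0 => [|y ys IH] t0 /=.
  by split=> [H|[t1 [-> H]]] //; exists t0.
split.
  move=> [t1 [Hs /IH [t2 [H1 H2]]]]; exists t2; split=> //; by exists t1.
move=> [t2 [[t1 [Hs H1]] H2]]; exists t1; split=> //; apply/IH; by exists t2.
Qed.

Lemma ext_rcons T t0 ys y t :
  ext T t0 (rcons ys y) t <-> exists t1, ext T t0 ys t1 /\ step1 T t1 y t.
Proof.
rewrite -cats1; split.
  by move=> /ext_cat [t1 [H1 [t2 [H2 ->]]]]; exists t1.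
by move=> [t1 [H1 H2]]; apply/ext_cat; exists t1; split=> //; exists t.
Qed.

Lemma attach_ext T w t : attach d T w t ->
  exists s' a n ys, w = (s', SymA a n) :: ys /\ ext T (Leaf (s', a, n)) ys t.
Proof.
elim=> {w t}.
- by move=> s' a n; exists s', a, n, [::].
- move=> w s' s n1 n2 t1 t2 Hd _ [s0 [a [n [ys [-> He]]]]] HT Hg.
  exists s0, a, n, (rcons ys (s', SymS s n1 n2)); split=> //.
  apply/ext_rcons; exists t1; split=> //; exact: s1_1.
- move=> w s' s n1 n2 t1 t2 Hd HT Hg _ [s0 [a [n [ys [-> He]]]]].
  exists s0, a, n, (rcons ys (s', SymS s n1 n2)); split=> //.
  apply/ext_rcons; exists t2; split=> //; exact: s1_2.
Qed.

Lemma ext_attach T s' a n ys t : ext T (Leaf (s', a, n)) ys t ->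
  attach d T ((s', SymA a n) :: ys) t.
Proof.
elim/last_ind: ys t => [|ys y IH] t /=.
  by move=> ->; apply: att_leaf.
move/ext_rcons=> [t1 [H1 H2]]; rewrite -rcons_cons.
case: H2 H1 => {y t}.
- move=> s0 s n1 n2 t0 t2 Hd HT Hg H1; apply: att_node1 => //; exact: IH.
- move=> s0 s n1 n2 t0 t2 Hd HT Hg H1; apply: att_node2 => //; exact: IH.
Qed.

Lemma attach_mono (T T' : xtree -> Prop) w t : (forall x, T x -> T' x) ->
  attach d T w t -> attach d T' w t.
Proof.
move=> HT; elim=> {w t}.
- by move=> *; apply: att_leaf.
- by move=> *; apply: att_node1 => //; auto.
- by move=> *; apply: att_node2 => //; auto.
Qed.

Lemma FL_closed (L : seq letter -> Prop) w t :
  L w -> attach d (FL d L) w t -> FL d L t.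
Proof.
move=> Lw Ha F HF; apply: (HF w t Lw).
by apply: attach_mono Ha => x Hx; apply: Hx.
Qed.

Lemma FL_iff (L L' : seq letter -> Prop) t :
  (forall w, L w <-> L' w) -> FL d L t -> FL d L' t.
Proof.
move=> HL H F HF; apply: H => w t' Lw; apply: HF; exact/HL.
Qed.

Lemma next_word_cons (x : sym) v :
  next_word (x :: v) = (ohead v, x) :: next_word v.
Proof. by case: v. Qed.

Lemma SGnt_nonempty n g v : SGnt P n g v -> v <> [::].
Proof.
elim=> // n0 b1 b2 g0 w1 w2 _ _ IH _ _.
by case: w1 IH.
Qed.

Definition rho0 (x : X0t) : Sig0 := x.1.2.
Definition rho2 (x : X2t) : Sig2 := x.1.1.2.

Hypothesis HdL : forall n s a, P (PL n s a) -> d s = D1.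
Hypothesis HdR : forall n s a, P (PR n s a) -> d s = D2.

Lemma step1_inv T t0 l s n1 n2 t : step1 T t0 (l, SymS s n1 n2) t ->
  (d s = D1 /\ exists t2, t = Node (l, s, n1, n2) t0 t2 /\ T t2 /\ gen_tree d t2 = n2) \/
  (d s = D2 /\ exists t1, t = Node (l, s, n1, n2) t1 t0 /\ T t1 /\ gen_tree d t1 = n1).
Proof.
move E: (l, SymS s n1 n2) => x H; case: H E => s' s0 m1 m2 u1 u2 Hd HT Hg [-> -> -> ->];
  [by left; split=> //; exists u2 | by right; split=> //; exists u1].
Qed.

Definition Good (t : xtree) : Prop :=
  exists n, gen_tree d t = inl n /\ Der n (relabel rho0 rho2 t).

Lemma sgnt_good n g v : SGnt P n g v -> forall b, n = inr b ->
  forall la t0 t, size la = size v -> ext Good t0 (zip la v) t ->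
  DerB b (relabel rho0 rho2 t0) (relabel rho0 rho2 t) /\ gen_tree d t = g.
Proof.
elim=> {n g v}.
- move=> n b1 b2 g w1 w2 Hp _ IH1 _ IH2 b [<-] la t0 t Hs.
  have Hle : size w1 <= size la by rewrite Hs size_cat leq_addr.
  rewrite -(cat_take_drop (size w1) la) zip_cat ?size_takel //.
  move/ext_cat=> [t1 [E1 E2]].
  have [D1 _] := IH1 _ erefl _ _ _ (size_takel Hle) E1.
  have Hs2 : size (drop (size w1) la) = size w2 by rewrite size_drop Hs size_cat addKn.
  have [D2 G2] := IH2 _ erefl _ _ _ Hs2 E2.
  split=> //; exact: derB_C Hp D1 D2.
- move=> n s a g Hp b [<-] [|l [|l' la]] //= t0 t _ [t1 [/step1_inv Hst ->]].
  case: Hst => [[Hd [t2 [-> [[n' [Hg HD]] Hg2]]]]|[Hd _]]; last by rewrite (HdL Hp) in Hd.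
  rewrite Hg in Hg2; case: Hg2 => En; subst n'.
  split; first exact: derB_L Hp HD.
  by rewrite /= /gen2 /= Hd.
- move=> n s a g Hp b [<-] [|l [|l' la]] //= t0 t _ [t1 [/step1_inv Hst ->]].
  case: Hst => [[Hd _]|[Hd [t2 [-> [[n' [Hg HD]] Hg2]]]]]; first by rewrite (HdR Hp) in Hd.
  rewrite Hg in Hg2; case: Hg2 => En; subst n'.
  split; first exact: derB_R Hp HD.
  by rewrite /= /gen2 /= Hd.
Qed.

Lemma size_la (v : seq sym) : v <> [::] ->
  size (rcons (map Some (behead v)) None) = size v.
Proof. by case: v => // x v _; rewrite size_rcons size_map. Qed.

Lemma Good_closed w t : Next (SG P) w -> attach d Good w t -> Good t.
Proof.
move=> [s [Hs [_ ->]]] /attach_ext [s' [a0 [n0 [ys [Ew He]]]]].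
case: Hs Ew He => {s}.
- move=> n a Hp /= [<- <- <- <-] /= ->.
  by exists n; split=> //=; apply: der_A.
- move=> n b a v Hp Hv; rewrite next_word_cons => -[<- <- <- <-] He.
  have [HD HG] := sgnt_good Hv erefl (size_la (SGnt_nonempty Hv)) He.
  by exists n; split=> //; apply: der_B Hp HD.
Qed.

Lemma FL_Good L t : (forall w, L w -> Next (SG P) w) -> FL d L t -> Good t.
Proof.
move=> HL H; apply: H => w t' Lw Ha; apply: Good_closed Ha; exact: HL.
Qed.

Lemma Der_FL :
  (forall n t, Der n t -> exists t', FL d (Next (SG P)) t' /\
      gen_tree d t' = inl n /\ relabel rho0 rho2 t' = t) /\
  (forall b r0 r, DerB b r0 r -> forall g, exists v, SGnt P (inr b) g v /\
      forall la t0, size la = size v -> relabel rho0 rho2 t0 = r0 ->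
      exists t1, ext (FL d (Next (SG P))) t0 (zip la v) t1 /\
        relabel rho0 rho2 t1 = r /\ gen_tree d t1 = g).
Proof.
set PD := fun n t (_ : Der n t) => exists t', FL d (Next (SG P)) t' /\
      gen_tree d t' = inl n /\ relabel rho0 rho2 t' = t.
set PDB := fun b r0 r (_ : DerB b r0 r) => forall g, exists v, SGnt P (inr b) g v /\
      forall la t0, size la = size v -> relabel rho0 rho2 t0 = r0 ->
      exists t1, ext (FL d (Next (SG P))) t0 (zip la v) t1 /\
        relabel rho0 rho2 t1 = r /\ gen_tree d t1 = g.
have H1 : forall n a (p : P (PA n a)), PD n (Leaf a) (der_A p).
  move=> n a Hp; exists (Leaf (None, a, inl n)); split=> //.
  apply: (@FL_closed _ [:: (None, SymA a (inl n))]); last exact: att_leaf.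
  by exists [:: SymA a (inl n)]; split=> //; apply: sg_A.
have H2 : forall n b a t (p : P (PB n b a)) (h : DerB b (Leaf a) t),
    PDB b (Leaf a) t h -> PD n t (der_B p h).
  move=> n b a t Hp h IH; have [v [Hv Hx]] := IH (inl n).
  have [t1 [He [Hr Hg]]] := Hx _ (Leaf (ohead v, a, inl n)) (size_la (SGnt_nonempty Hv)) erefl.
  exists t1; split=> //.
  apply: (@FL_closed _ (next_word (SymA a (inl n) :: v))).
    exists (SymA a (inl n) :: v); split=> //; exact: sg_B Hp Hv.
  by rewrite next_word_cons; apply: ext_attach.
have H3 : forall n b1 b2 t0 t1 t (p : P (PC n b1 b2)) (h1 : DerB b2 t0 t1),
    PDB b2 t0 t1 h1 -> forall (h2 : DerB b1 t1 t), PDB b1 t1 t h2 -> PDB n t0 t (derB_C p h1 h2).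
  move=> n b1 b2 t0 t1 t Hp h1 IH1 h2 IH2 g.
  have [v1 [Hv1 Hx1]] := IH1 g; have [v2 [Hv2 Hx2]] := IH2 g.
  exists (v1 ++ v2); split; first exact: sg_C Hp Hv1 Hv2.
  move=> la t0' Hs Hr.
  have Hle : size v1 <= size la by rewrite Hs size_cat leq_addr.
  have [u1 [E1 [R1 _]]] := Hx1 _ _ (size_takel Hle) Hr.
  have Hs2 : size (drop (size v1) la) = size v2 by rewrite size_drop Hs size_cat addKn.
  have [u2 [E2 [R2 G2]]] := Hx2 _ _ Hs2 R1.
  exists u2; split=> //.
  rewrite -(cat_take_drop (size v1) la) zip_cat ?size_takel //.
  by apply/ext_cat; exists u1.
have H4 : forall n s a t0 t2 (p : P (PL n s a)) (h : Der a t2),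
    PD a t2 h -> PDB n t0 (Node s t0 t2) (derB_L t0 p h).
  move=> n s a t0 t2 Hp h [t2' [HF [Hg Hr]]] g.
  exists [:: SymS s g (inl a)]; split; first exact: sg_L.
  move=> [|l [|l' la]] //= t0' _ Hr0.
  exists (Node (l, s, g, inl a) t0' t2'); split.
    by exists (Node (l, s, g, inl a) t0' t2'); split=> //; apply: s1_1 => //; exact: HdL Hp.
  by rewrite /= Hr0 Hr /gen2 /= (HdL Hp).
have H5 : forall n s a t0 t2 (p : P (PR n s a)) (h : Der a t2),
    PD a t2 h -> PDB n t0 (Node s t2 t0) (derB_R t0 p h).
  move=> n s a t0 t2 Hp h [t2' [HF [Hg Hr]]] g.
  exists [:: SymS s (inl a) g]; split; first exact: sg_R.
  move=> [|l [|l' la]] //= t0' _ Hr0.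
  exists (Node (l, s, inl a, g) t2' t0'); split.
    by exists (Node (l, s, inl a, g) t2' t0'); split=> //; apply: s1_2 => //; exact: HdR Hp.
  by rewrite /= Hr0 Hr /gen2 /= (HdR Hp).
split.
  move=> n t h; exact: (Der_mut H1 H2 H3 H4 H5 h).
move=> b r0 r h; exact: (DerB_mut H1 H2 H3 H4 H5 h).
Qed.

Lemma part2 S (L : seq letter -> Prop) (HL : forall w, L w <-> Next (SG P) w) t :
  TG S P t <-> exists t', FL_S d S L t' /\ relabel rho0 rho2 t' = t.
Proof.
split.
  move=> /TG_Der /(proj1 Der_FL) [t' [HF [Hg Hr]]]; exists t'; split=> //; split=> //.
  by apply: FL_iff HF => w; split=> /HL.
move=> [t' [[HF Hg] <-]].
have [n [Hg' HD]] := FL_Good (fun w => proj1 (HL w)) HF.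
apply/TG_Der; by rewrite Hg in Hg'; case: Hg' => ->.
Qed.

End Part2.

Theorem corollary6p7 (N0 N1 Sig0 Sig2 : finType) (S : N0)
  (P : pred (production N0 N1 Sig0 Sig2)) (d : Sig2 -> dir) :
  normalized_spine S P d ->
  let L1 := fun w : seq (letter N0 N1 Sig0 Sig2) =>
              Next (SG P) w /\ size w = 1 in
  exists A : mpda (letter N0 N1 Sig0 Sig2),
    pop_normalized A /\
    (forall w, mlang A w \/ L1 w <-> Next (SG P) w) /\
    exists (rho0 : X0 N0 N1 Sig0 Sig2 -> Sig0) (rho2 : X2 N0 N1 Sig0 Sig2 -> Sig2),
      forall t : tree Sig0 Sig2,
        TG S P t <->
        exists t', FL_S d S (fun w => mlang A w \/ L1 w) t' /\
                   relabel rho0 rho2 t' = t.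
Proof.
move=> [_ [_ [HdL [HdR _]]]] L1.
exists (AA P); split; first exact: AA_pop.
have Hiff := @mlang_iff N0 N1 Sig0 Sig2 P.
split; first exact: Hiff.
exists (@rho0 N0 N1 Sig0 Sig2), (@rho2 N0 N1 Sig0 Sig2) => t.
exact: (@part2 N0 N1 Sig0 Sig2 P d HdL HdR S _ Hiff t).
Qed.
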